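(* Let $V$ be a finite set, $f:2^V\to\mathbb{R}$ non-decreasing and submodular, $k\ge1$ an integer, $\mathrm{OPT}\subseteq V$ with $|\mathrm{OPT}|=k$ maximizing $f$ among $k$-element subsets of $V$, $A\subseteq V$ with $|A|=k$, and $A'\subseteq A$ with $|A'|<k$. Let $B'\subseteq V\setminus A'$ be the greedy set: starting from $B'=\emptyset$, while $|B'|<k-|A'|$, add an element $e\in V\setminus(A'\cup B')$ maximizing $f(A'\cup B'\cup\{e\})-f(A'\cup B')$. Then \[ f(B'\cup A')\ \ge\ f(A')+\frac{1-\frac1e}{\left\lceil\frac{|\mathrm{OPT}\setminus A'|}{k-|A'|}\right\rceil}\bigl(f(\mathrm{OPT}\cup A')-f(A')\bigr). \]
   Context: $f$ non-decreasing means $f(X)\le f(Y)$ for $X\subseteq Y$; submodular means $f(X\cup\{e\})-f(X)\ge f(Y\cup\{e\})-f(Y)$ for $X\subseteq Y\subseteq V$, $e\notin Y$. *)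

(* Defs.v *)
From HB Require Import structures.
From mathcomp Require Import all_boot all_order all_algebra.
From mathcomp Require Import reals sequences exp.
Set Implicit Arguments. Unset Strict Implicit. Unset Printing Implicit Defensive.
Import Order.TTheory GRing.Theory Num.Theory.
Local Open Scope ring_scope.

Section Defs.
Variables (R : realType) (V : finType).

Definition nondecreasing_setfun (f : {set V} -> R) : Prop :=
  forall X Y : {set V}, X \subset Y -> f X <= f Y.

Definition submodular (f : {set V} -> R) : Prop :=
  forall (X Y : {set V}) (e : V), X \subset Y -> e \notin Y ->
    f (e |: X) - f X >= f (e |: Y) - f Y.

Definition greedy_step (f : {set V} -> R) (S : {set V}) (e : V) : Prop :=
  e \notin S /\
  forall x : V, x \notin S -> f (x |: S) - f S <= f (e |: S) - f S.

(* The sequence s of chosen elements is a run of the greedy algorithm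
   starting from the current set S (here S = A' :|: B' so far). *)
Fixpoint greedy_run (f : {set V} -> R) (S : {set V}) (s : seq V) : Prop :=
  match s with
  | [::] => True
  | e :: s' => greedy_step f S e /\ greedy_run f (e |: S) s'
  end.

End Defs.

(* Main.v *)
Require Import Defs.
From HB Require Import structures.
From mathcomp Require Import all_boot all_order all_algebra.
From mathcomp Require Import reals sequences exp.
From mathcomp Require Import lra.
Import Order.TTheory GRing.Theory Num.Theory.
Local Open Scope ring_scope.

Section Aux.
Variables (R : realType) (V : finType) (f : {set V} -> R).
Hypothesis mono : nondecreasing_setfun f.
Hypothesis sub : submodular f.

Lemma marg_ge0 (x : V) S : 0 <= f (x |: S) - f S.
Proof. rewrite subr_ge0; apply: mono; exact: subsetUr. Qed.

Lemma sum_bound (S : {set V}) (d : R) (t : seq V) :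
  (forall x, f (x |: S) - f S <= d) ->
  f ([set x in t] :|: S) - f S <= (size t)%:R * d.
Proof.
move=> Hd; elim: t => [|x t IH].
  by rewrite /= mul0r (_ : [set x in [::]] = set0) ?set0U ?subrr //; apply/setP=> y; rewrite !inE.
have -> : [set y in x :: t] :|: S = x |: ([set y in t] :|: S).
  by apply/setP=> y; rewrite !inE orbA.
set Y := [set y in t] :|: S.
have h1 : f (x |: Y) - f Y <= d.
  case: (boolP (x \in Y)) => xY.
    rewrite (setUidPr _) ?sub1set // subrr; exact: le_trans (marg_ge0 x S) (Hd x).
  apply: le_trans (Hd x); apply: sub => //; exact: subsetUr.
rewrite /= -nat1r mulrDl mul1r.
have := IH; lra.
Qed.

Lemma step_bound (S : {set V}) e : greedy_step f S e ->
  forall x, f (x |: S) - f S <= f (e |: S) - f S.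
Proof.
case=> _ H x; case: (boolP (x \in S)) => xS; last exact: H.
rewrite (setUidPr _) ?sub1set // subrr; exact: marg_ge0.
Qed.

Variables (OPT A' : {set V}).
Let o := #|OPT :\: A'|.
Let Fs := f (OPT :|: A').

Lemma one_step (S : {set V}) e : (0 < o)%N -> A' \subset S -> greedy_step f S e ->
  Fs - f (e |: S) <= (1 - o%:R^-1) * (Fs - f S).
Proof.
move=> o0 AS ge.
have := @sum_bound S _ (enum (OPT :\: A')) (@step_bound S e ge).
rewrite -cardE -/o.
have -> : [set x in enum (OPT :\: A')] = OPT :\: A' by apply/setP=> y; rewrite !inE mem_enum !inE.
have : Fs <= f ((OPT :\: A') :|: S).
  apply: mono; apply/subsetP=> y; rewrite !inE; case/orP=> [yO|yA].
    by case: (boolP (y \in A')) => yA; [rewrite (subsetP AS) ?orbT | rewrite yO].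
  by rewrite (subsetP AS) ?orbT.
have opos : 0 < o%:R :> R by rewrite ltr0n.
move=> h1 h2.
have h3 : Fs - f S <= o%:R * (f (e |: S) - f S) by lra.
rewrite mulrBl mul1r.
have : o%:R^-1 * (Fs - f S) <= f (e |: S) - f S.
  by rewrite ler_pdivrMl // mulrC; rewrite mulrC in h3; rewrite mulrC; rewrite -[X in _ <= X](mulrK (lt0r_neq0 opos)) ; nra.
lra.
Qed.
Lemma run_bound (s : seq V) : forall S : {set V}, (0 < o)%N -> A' \subset S -> greedy_run f S s ->
  Fs - f ([set x in s] :|: S) <= (1 - o%:R^-1) ^+ (size s) * (Fs - f S).
Proof.
elim: s => [|e s IH] S o0 AS /=.
  move=> _; rewrite expr0 mul1r (_ : [set x in [::]] = set0) ?set0U //; apply/setP=> y; rewrite !inE.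
case=> ge run.
have AS' : A' \subset e |: S by apply: subset_trans AS (subsetUr _ _).
have -> : [set y in e :: s] :|: S = [set y in s] :|: (e |: S).
  by apply/setP=> y; rewrite !inE orbA (orbC (y == e)).
apply: le_trans (IH _ o0 AS' run) _.
rewrite exprSr -mulrA; apply: ler_wpM2l.
  apply: exprn_ge0; rewrite subr_ge0 invf_le1 ?ltr0n // ler1n //.
exact: one_step.
Qed.
End Aux.
Lemma powle (R : realType) (x y : R) n : 0 <= x -> x <= y -> x ^+ n <= y ^+ n.
Proof. move=> x0 xy; apply: lerXn2r => //; rewrite nnegrE //; lra. Qed.

Lemma pow_exp (R : realType) (n : nat) : (0 < n)%N ->
  (1 - (n%:R : R)^-1) ^+ n <= (expR 1)^-1.
Proof.
move=> n0.
have np : 0 < n%:R :> R by rewrite ltr0n.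
have h0 : 0 <= 1 - (n%:R : R)^-1.
  rewrite subr_ge0 invf_le1 // ler1n //.
rewrite -expRN.
have -> : (- 1 : R) = n%:R * (- (n%:R)^-1) by rewrite mulrN mulfV ?gt_eqF.
rewrite expRM_natl; apply: powle => //.
have := expR_ge1Dx (- (n%:R : R)^-1); lra.
Qed.

Lemma geom (R : realType) (y : R) (c : nat) : 0 <= y <= 1 ->
  1 - y ^+ c <= c%:R * (1 - y).
Proof.
case/andP=> y0 y1; elim: c => [|c IH]; first by rewrite expr0 mul0r subrr.
rewrite exprS -nat1r mulrDl mul1r.
have : 0 <= y ^+ c <= 1 by rewrite exprn_ge0 // exprn_ile1.
case/andP=> a b.
have : y * y ^+ c >= y ^+ c * y by rewrite mulrC.
nra.
Qed.

Lemma numeric (R : realType) (o m c : nat) : (0 < m)%N -> (0 < o)%N -> (o <= c * m)%N ->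
  (1 - (expR 1)^-1) / (c%:R : R) <= 1 - (1 - (o%:R : R)^-1) ^+ m.
Proof.
move=> m0 o0 ocm.
have c0 : (0 < c)%N by case: c ocm => //; rewrite mul0n leqn0 => /eqP o00; rewrite o00 in o0.
have cp : 0 < c%:R :> R by rewrite ltr0n.
have op : 0 < o%:R :> R by rewrite ltr0n.
have cmp : (0 < c * m)%N by rewrite muln_gt0 c0.
set r := 1 - ((c * m)%:R : R)^-1.
have cmr : 0 < (c * m)%:R :> R by rewrite ltr0n.
have hq : 0 <= 1 - (o%:R : R)^-1 by rewrite subr_ge0 invf_le1 // ler1n.
have hqr : 1 - (o%:R : R)^-1 <= r.
  rewrite /r lerD2l lerN2 lef_pV2 ?posrE // ler_nat. exact: ocm.
have r0 : 0 <= r by exact: le_trans hq hqr.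
have r1 : r <= 1 by rewrite /r; have := cmr; rewrite -invr_gt0; lra.
set y := r ^+ m.
have y0 : 0 <= y <= 1 by rewrite exprn_ge0 // exprn_ile1.
have hy : y ^+ c <= (expR 1)^-1 by rewrite /y -exprM mulnC; exact: pow_exp.
have := @geom R y c y0.
have : (1 - (o%:R : R)^-1) ^+ m <= y by exact: powle.
move=> h1 h2.
rewrite ler_pdivrMr //.
have : 1 - (expR 1)^-1 <= c%:R * (1 - y) by lra.
move=> h3; apply: le_trans h3 _; rewrite [X in _ <= X]mulrC; apply: ler_wpM2l; lra.
Qed.

Theorem mainTheorem3 (R : realType) (V : finType) (f : {set V} -> R) (k : nat)
  (OPT A A' : {set V}) (s : seq V) :
  nondecreasing_setfun f -> submodular f -> (1 <= k)%N ->
  #|OPT| = k -> (forall S : {set V}, #|S| = k -> f S <= f OPT) ->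
  #|A| = k -> A' \subset A -> (#|A'| < k)%N ->
  greedy_run f A' s -> size s = (k - #|A'|)%N ->
  let B' := [set x in s] in
  f (B' :|: A') >=
    f A' + (1 - (expR 1)^-1)
             / (Num.ceil ((#|OPT :\: A'|)%:R / (k - #|A'|)%N%:R : R))%:~R
             * (f (OPT :|: A') - f A').
Proof.
move=> mono sub k1 _ _ _ _ kA run sz /=.
set m := (k - #|A'|)%N.
have m0 : (0 < m)%N by rewrite subn_gt0.
have mp : 0 < m%:R :> R by rewrite ltr0n.
have Dge : 0 <= f (OPT :|: A') - f A' by rewrite subr_ge0; apply: mono; exact: subsetUr.
have mon : f A' <= f ([set x in s] :|: A') by apply: mono; exact: subsetUr.
case: (posnP #|OPT :\: A'|) => [->|o0].
  by rewrite mul0r ceil0 invr0 mulr0 mul0r addr0.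
have hb := @run_bound R V f mono sub OPT A' s A' o0 (subxx A') run.
rewrite sz -/m in hb.
have hc := ceil_ge (#|OPT :\: A'|%:R / m%:R : R).
have hc0 : 0 < Num.ceil (#|OPT :\: A'|%:R / m%:R : R) by rewrite ceil_gt0 divr_gt0 // ltr0n.
move: (Num.ceil _) hc hc0 => [c|c] hc hc0 //.
rewrite pmulrn in hc *.
have ocm : (#|OPT :\: A'| <= c * m)%N.
  by rewrite -(ler_nat R) natrM -ler_pdivrMr.
have := @numeric R _ _ _ m0 o0 ocm.
set q := (1 - _) ^+ m; move=> hn.
have : (1 - (expR 1)^-1) / c%:R * (f (OPT :|: A') - f A') <= (1 - q) * (f (OPT :|: A') - f A').
  exact: ler_wpM2r.
move=> h; rewrite -/q in hb.
have ec : (Posz c)%:~R = c%:R :> R by rewrite pmulrn.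
rewrite ec; lra.
Qed.
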